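(* For every integer $n\ge0$, the number of walks $0=y_0,y_1,\dots,y_n=2$ with $y_i-y_{i-1}\in\{-2,-1,+1,+2\}$ for all $i$ and $y_i\ge1$ for all $1\le i\le n$ (basketball walks of length $n$ from the origin to altitude $2$ never returning to the $x$-axis) equals $$\frac{1}{2n+1}\sum_{k=0}^{n+1}(-1)^{n+k+1}\binom{2n+1}{n+k}\binom{n+2k-1}{k}.$$
   Context: For integers $a$ and $b$, $\binom ab=a(a-1)\cdots(a-b+1)/b!$ if $b\ge0$ (so $\binom{-1}{0}=1$) and $\binom ab=0$ if $b<0$. *)

(* Defs.v *)
From mathcomp Require Import all_boot all_order all_algebra.
Set Implicit Arguments. Unset Strict Implicit. Unset Printing Implicit Defensive.
Import Order.TTheory GRing.Theory Num.Theory.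
Local Open Scope ring_scope.

(* Generalized binomial: for a : int and b >= 0,
   binz a b = a (a-1) ... (a-b+1) / b!  (so binz (-1) 0 = 1). *)
Definition binz (a : int) (b : nat) : rat :=
  (\prod_(i < b) (a - i%:Z)%:~R) / (b`!)%:R.

Definition stepv (c : 'I_4) : int := nth 0 [:: -2; -1; 1; 2] c.

Definition alt (n : nat) (s : {ffun 'I_n -> 'I_4}) (i : nat) : int :=
  \sum_(j < n | (j < i)%N) stepv (s j).

(* Basketball walks of length n from 0 to altitude 2 with y_i >= 1 for 1 <= i <= n,
   encoded by their step sequences (a bijection with the sequences y_0..y_n). *)
Definition bb_walks (n : nat) : {set {ffun 'I_n -> 'I_4}} :=
  [set s | [forall i : 'I_n.+1, (0 < i)%N ==> (1 <= alt s i)] && (alt s n == 2)].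

(* Main.v *)
Require Import Defs.
From mathcomp Require Import all_boot all_order all_algebra.
From mathcomp Require Import ring zify.
Import Order.TTheory GRing.Theory Num.Theory.
Local Open Scope ring_scope.
Set Implicit Arguments. Unset Strict Implicit. Unset Printing Implicit Defensive.

Definition cg (M : nat) (p q : {poly rat}) := exists r, p - q = r * 'X^M.

Lemma cgxx M p : cg M p p.
Proof. by exists 0; rewrite subrr mul0r. Qed.

Lemma cg_sym M p q : cg M p q -> cg M q p.
Proof. by case=> r h; exists (- r); rewrite mulNr -h opprB. Qed.

Lemma cg_trans M p q s : cg M p q -> cg M q s -> cg M p s.
Proof.
by case=> r1 h1 [r2 h2]; exists (r1 + r2); rewrite mulrDl -h1 -h2 addrA subrK.
Qed.

Lemma cgD M p q p' q' : cg M p q -> cg M p' q' -> cg M (p + p') (q + q').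
Proof.
case=> r1 h1 [r2 h2]; exists (r1 + r2).
by rewrite mulrDl -h1 -h2; ring.
Qed.

Lemma cgN M p q : cg M p q -> cg M (- p) (- q).
Proof. by case=> r h; exists (- r); rewrite mulNr -h; ring. Qed.

Lemma cgMl M r p q : cg M p q -> cg M (r * p) (r * q).
Proof. by case=> s h; exists (r * s); rewrite -mulrA -h; ring. Qed.

Lemma cgMr M r p q : cg M p q -> cg M (p * r) (q * r).
Proof. by move=> h; rewrite ![_ * r]mulrC; apply: cgMl. Qed.

Lemma cgM M p q p' q' : cg M p q -> cg M p' q' -> cg M (p * p') (q * q').
Proof.
move=> h1 h2; apply: (@cg_trans _ _ (q * p')); first exact: cgMr.
exact: cgMl.
Qed.

Lemma cgX M p q k : cg M p q -> cg M (p ^+ k) (q ^+ k).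
Proof.
move=> h; elim: k => [|k ih]; first exact: cgxx.
by rewrite !exprS; apply: cgM.
Qed.

Lemma cg_coef M p q k : cg M p q -> (k < M)%N -> p`_k = q`_k.
Proof.
case=> r h kM; have -> : p = q + r * 'X^M by rewrite -h; ring.
by rewrite coefD coefMXn kM addr0.
Qed.

Lemma cg_le M M' p q : (M' <= M)%N -> cg M p q -> cg M' p q.
Proof.
move=> le [r h]; exists (r * 'X^(M - M')).
by rewrite h -mulrA -exprD subnK.
Qed.

Definition io (M : nat) : {poly rat} := \sum_(i < M) (- 'X) ^+ i.

Lemma io_mul M : (1 + 'X) * io M = 1 - (- 'X) ^+ M.
Proof.
elim: M => [|M ih]; first by rewrite /io big_ord0 expr0; ring.
rewrite /io big_ord_recr /= mulrDr -/(io M) ih exprS; ring.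
Qed.

Lemma cg_io M : cg M ((1 + 'X) * io M) 1.
Proof.
exists (- (-1) ^+ M); rewrite io_mul (exprNn 'X); ring.
Qed.

Lemma cg_io_pow M p j k :
  cg M (p * (1 + 'X) ^+ j * io M ^+ (k + j)) (p * io M ^+ k).
Proof.
have -> : p * (1 + 'X) ^+ j * io M ^+ (k + j) =
          (p * io M ^+ k) * ((1 + 'X) * io M) ^+ j by rewrite exprMn exprD; ring.
apply: (@cg_trans _ _ ((p * io M ^+ k) * 1 ^+ j)); last by rewrite expr1n mulr1; apply: cgxx.
by apply: cgMl; apply: cgX; apply: cg_io.
Qed.

Lemma cg_io_mono M M' : (M <= M')%N -> cg M (io M') (io M).
Proof.
move=> le.
have h1 : cg M ((1 + 'X) * io M') 1 := @cg_le M' M _ _ le (cg_io M').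
have h2 := cg_io M.
apply: (@cg_trans _ _ (io M' * ((1 + 'X) * io M))).
  by apply: cg_sym; rewrite -[X in cg _ _ X]mulr1; apply: cgMl.
rewrite (_ : io M' * ((1 + 'X) * io M) = io M * ((1 + 'X) * io M')); last by ring.
by rewrite -[X in cg _ _ X]mulr1; apply: cgMl.
Qed.

Lemma X_derivXN M : 'X * ((- 'X) ^+ M)^`() = (- 'X) ^+ M *+ M :> {poly rat}.
Proof.
case: M => [|m]; first by rewrite expr0 derivC mulr0 mulr0n.
rewrite deriv_exp /= derivN derivX exprS mulrnAr; congr (_ *+ _); ring.
Qed.

Lemma cg_dio M : cg M ('X * (io M)^`()) (- ('X * io M ^+ 2)).
Proof.
have e : 'X * io M + (1 + 'X) * ('X * (io M)^`()) = - ((- 'X) ^+ M *+ M).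
  have := congr1 (fun p => 'X * p^`()) (io_mul M) => /=.
  rewrite derivM derivD derivC derivX derivB derivC sub0r mulrN X_derivXN => <-; ring.
have h0 : cg M ('X * io M + (1 + 'X) * ('X * (io M)^`())) 0.
  by exists (- ((-1) ^+ M *+ M)); rewrite e (exprNn 'X) subr0 -mulrnAl; ring.
have h1 : cg M ('X * (io M)^`()) (((1 + 'X) * io M) * ('X * (io M)^`())).
  by rewrite -[X in cg _ X _]mul1r; apply: cgMr; apply: cg_sym; apply: cg_io.
apply: (cg_trans h1).
have -> : (1 + 'X) * io M * ('X * (io M)^`()) =
   io M * ('X * io M + (1 + 'X) * ('X * (io M)^`())) - 'X * io M ^+ 2 by ring.
rewrite -[X in cg _ _ X]add0r; apply: cgD; last exact: cgxx.
by rewrite -(mulr0 (io M)); apply: cgMl.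
Qed.

Lemma coef_Xderiv (q : {poly rat}) N : ('X * q^`())`_N = q`_N *+ N.
Proof.
rewrite coefXM; case: N => [|N] /=; first by rewrite mulr0n.
by rewrite coef_deriv.
Qed.

Lemma null_lemma M P k N : (N < M)%N ->
  (P * io M ^+ k)`_N *+ N =
  ('X * P^`() * io M ^+ k - ('X * P * io M ^+ k.+1) *+ k)`_N.
Proof.
move=> NM; rewrite -coef_Xderiv; apply: cg_coef NM.
rewrite derivM deriv_exp mulrDr.
apply: cgD; first by rewrite mulrA; apply: cgxx.
case: k => [|k]; first by rewrite !mulr0n mulr0 mulr0 oppr0; apply: cgxx.
rewrite /= (_ : 'X * (P * ((io M)^`() * io M ^+ k *+ k.+1)) =
   (P * io M ^+ k *+ k.+1) * ('X * (io M)^`())); last by rewrite -!mulrnAr; ring.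
rewrite (_ : 'X * P * io M ^+ k.+2 *+ k.+1 = - ((P * io M ^+ k *+ k.+1) * (- ('X * io M ^+ 2))));
  last by rewrite mulrN opprK mulrnAl; congr (_ *+ _); rewrite !exprS; ring.
apply: (@cg_trans _ _ (P * io M ^+ k *+ k.+1 * - ('X * io M ^+ 2))).
  by apply: cgMl; apply: cg_dio.
by rewrite opprK; apply: cgxx.
Qed.

Definition Phi : {poly rat} := 1 + 'X + 'X^2.
Definition Tp : {poly rat} := 1 + 'X - 'X^2 *+ 3 - 'X^3 *+ 2.

Fixpoint G (y : nat) : {poly rat} :=
  match y with
  | 0 => 1
  | y'.+1 => 'X * (1 + 'X) * (G y' + match y' with 0 => 0 | y''.+1 => G y'' end)
  end.

Definition Gp (y : nat) : {poly rat} := if y is y'.+1 then G y' else 0.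

Lemma G_eq k : G k.+1 = 'X * (1 + 'X) * (G k + Gp k).
Proof. by case: k. Qed.

Lemma GpS k : Gp k.+1 = G k.
Proof. by []. Qed.

Definition Rrel (y : nat) : Prop :=
  G y.+1 * Phi ^+ 2 * (1 + 'X) =
  'X * (Gp y * (1 + 'X) ^+ 4 + G y * (1 + 'X) ^+ 3 + G y.+2 * (1 + 'X) + G y.+3).

Lemma Rrel_all y : Rrel y.
Proof.
suff : Rrel y /\ Rrel y.+1 by case.
elim: y => [|y [h0 h1]].
  by split; rewrite /Rrel /= /Phi; ring.
split => //.
move: h0 h1; rewrite /Rrel => h0 h1.
apply/eqP; rewrite -subr_eq0; apply/eqP.
have -> : G y.+3 * Phi ^+ 2 * (1 + 'X) -
  'X * (Gp y.+2 * (1 + 'X) ^+ 4 + G y.+2 * (1 + 'X) ^+ 3 + G y.+4 * (1 + 'X) + G y.+4.+1)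
  = 'X * (1 + 'X) * ((G y.+2 * Phi ^+ 2 * (1 + 'X) -
  'X * (Gp y.+1 * (1 + 'X) ^+ 4 + G y.+1 * (1 + 'X) ^+ 3 + G y.+3 * (1 + 'X) + G y.+4))
  + (G y.+1 * Phi ^+ 2 * (1 + 'X) -
  'X * (Gp y * (1 + 'X) ^+ 4 + G y * (1 + 'X) ^+ 3 + G y.+2 * (1 + 'X) + G y.+3))).
  by rewrite !(GpS, G_eq); ring.
by rewrite h0 h1 !subrr addr0 mulr0.
Qed.

Lemma dPhi : Phi^`() = 1 + 'X *+ 2.
Proof. by rewrite /Phi !derivD derivC derivX derivXn /= add0r. Qed.

Lemma boundary m M : (m.+1 < M)%N ->
  (Phi ^+ (m.*2.+1) * Tp * io M ^+ m.+2)`_m.+1 = 0.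
Proof.
move=> hM.
have nl := null_lemma (Phi ^+ (m.*2.+2)) (m.+1) hM.
set u := io M in nl *.
set W := Phi ^+ (m.*2.+1) in nl *.
have eP : Phi ^+ (m.*2.+2) = Phi * W by rewrite /W exprS.
have eP' : (Phi ^+ (m.*2.+2))^`() = (1 + 'X *+ 2) * W * (m.+1)%:R * 2%:R.
  by rewrite deriv_exp dPhi /= -/W -mulr_natr -[RHS]mulrA -natrM muln2 doubleS.
rewrite eP' eP in nl.
have h1 : cg M (u ^+ m.+1) ((1 + 'X) * u ^+ m.+2).
  have := @cg_io_pow M 1 1 m.+1; rewrite !mul1r expr1 addn1 => h.
  by apply: cg_sym.
have hc : cg M ((Phi * W * u ^+ m.+1) *+ m.+1 -
            ('X * ((1 + 'X *+ 2) * W * (m.+1)%:R * 2%:R) * u ^+ m.+1 -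
             ('X * (Phi * W) * u ^+ m.+2) *+ m.+1))
          ((W * Tp * u ^+ m.+2) *+ m.+1).
  rewrite (_ : _ - _ = (m.+1)%:R * W * (Phi - 'X * (1 + 'X *+ 2) * 2%:R) * u ^+ m.+1
                + (m.+1)%:R * W * 'X * Phi * u ^+ m.+2); last by ring.
  apply: (@cg_trans _ _ ((m.+1)%:R * W * (Phi - 'X * (1 + 'X *+ 2) * 2%:R) * ((1 + 'X) * u ^+ m.+2)
                + (m.+1)%:R * W * 'X * Phi * u ^+ m.+2)).
    by apply: cgD; [apply: cgMl | apply: cgxx].
  rewrite (_ : _ + _ = (W * Tp * u ^+ m.+2) *+ m.+1); first exact: cgxx.
  by rewrite /Tp /Phi; ring.
have := cg_coef hc hM; rewrite coefD coefN coefMn nl subrr coefMn => /esym/eqP.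
by rewrite -mulr_natr mulf_eq0 pnatr_eq0 orbF => /eqP.
Qed.

Lemma cg_unit M p V j : cg M (p * ((1 + 'X) ^+ j * io M ^+ j) * V) (p * V).
Proof.
rewrite -exprMn (_ : p * V = p * 1 * V); last by rewrite mulr1.
apply: cgMr; apply: cgMl.
rewrite -[X in cg _ _ X](expr1n _ j); apply: cgX; exact: cg_io.
Qed.

Lemma cg_eq M p q : p = q -> cg M p q.
Proof. by move=> ->; apply: cgxx. Qed.

Definition A (n y : nat) : rat :=
  (G y * Phi ^+ (n.*2.-1) * Tp * io n.+2 ^+ (n.+1 + y))`_n.

Lemma A_zero m : A m.+1 0 = 0.
Proof.
rewrite /A doubleS /= mul1r addn0; exact: boundary.
Qed.

Lemma A_rec m y : A m.+2 y.+1 =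
  A m.+1 y.+3 + A m.+1 y.+2 + A m.+1 y + (if y is y'.+1 then A m.+1 y' else 0).
Proof.
set u := io m.+3.
set W := Phi ^+ (m.*2.+1).
set U := u ^+ (m + y + 1).
have eA k c : (m.+2 + k = m + y + 1 + c)%N -> A m.+1 k = (G k * W * Tp * (U * u ^+ c))`_m.+1.
  by move=> e; rewrite /A e exprD doubleS.
have eGp : (if y is y'.+1 then A m.+1 y' else 0) = (Gp y * W * Tp * (U * u ^+ 0))`_m.+1.
  case: y @U eA => [|y'] U eA; first by rewrite /= !mul0r coef0.
  by rewrite /Gp (eA y' 0) //; lia.
rewrite eGp (eA y.+3 4) ?(eA y.+2 3) ?(eA y 1); try lia.
have eL : A m.+2 y.+1 = (G y.+1 * (Phi ^+ 2 * W) * Tp * (io m.+4 ^+ (m + y + 1) * io m.+4 ^+ 3))`_m.+2.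
  rewrite /A (_ : ((m.+2).*2.-1 = 2 + m.*2.+1)%N); last by rewrite !doubleS.
  by rewrite (_ : (m.+3 + y.+1 = m + y + 1 + 3)%N) ?exprD //; lia.
rewrite eL.
have hmono : cg m.+3 (io m.+4) u by apply: cg_io_mono.
have c1 : cg m.+3 (G y.+1 * (Phi ^+ 2 * W) * Tp * (io m.+4 ^+ (m + y + 1) * io m.+4 ^+ 3))
                  (G y.+1 * (Phi ^+ 2 * W) * Tp * (U * u ^+ 3)).
  by apply: cgMl; apply: cgM; apply: cgX.
have c2 : cg m.+3 (G y.+1 * (Phi ^+ 2 * W) * Tp * (U * u ^+ 3))
   ((G y.+1 * Phi ^+ 2 * (1 + 'X)) * W * Tp * (U * u ^+ 4)).
  apply: cg_sym.
  have h := cg_unit m.+3 (G y.+1 * (Phi ^+ 2 * W) * Tp) (U * u ^+ 3) 1.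
  rewrite !expr1 -/u in h; apply: (cg_trans _ h); apply: cg_eq.
  by rewrite !exprS; ring.
set S := G y.+3 * W * Tp * (U * u ^+ 4) + G y.+2 * W * Tp * (U * u ^+ 3)
   + G y * W * Tp * (U * u ^+ 1) + Gp y * W * Tp * (U * u ^+ 0).
have c3 : cg m.+3 ((G y.+1 * Phi ^+ 2 * (1 + 'X)) * W * Tp * (U * u ^+ 4)) ('X * S).
  rewrite Rrel_all.
  apply: (@cg_trans _ _ ('X * (G y.+3 * W * Tp * (U * u ^+ 4)
     + G y.+2 * W * Tp * ((1 + 'X) ^+ 1 * u ^+ 1) * (U * u ^+ 3)
     + G y * W * Tp * ((1 + 'X) ^+ 3 * u ^+ 3) * (U * u ^+ 1)
     + Gp y * W * Tp * ((1 + 'X) ^+ 4 * u ^+ 4) * (U * u ^+ 0)))).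
    by apply: cg_eq; ring.
  apply: cgMl; rewrite /S; apply: cgD; [apply: cgD; [apply: cgD|]|]; try exact: cgxx;
    exact: cg_unit.
have := cg_coef (cg_trans c1 (cg_trans c2 c3)) (ltnSn m.+2).
rewrite coefXM /= => ->.
by rewrite /S !coefD.
Qed.

Lemma coef0_pow (p : {poly rat}) k : (p ^+ k)`_0 = p`_0 ^+ k.
Proof. by elim: k => [|k ih]; rewrite ?expr0 ?coef1 // !exprS coef0M ih. Qed.

Lemma coef0_io M : (io M.+1)`_0 = 1.
Proof.
have := congr1 (fun p : {poly rat} => p`_0) (io_mul M.+1).
rewrite /= coef0M coefB !coefD coef1 coefX (exprNn 'X) coefMXn /= => h.
transitivity ((1 + 0) * (io M.+1)`_0); first by ring.
by rewrite h; ring.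
Qed.

Lemma coef0_G k : (G k)`_0 = (k == 0)%:R.
Proof. by case: k => [|k]; rewrite ?coef1 // G_eq -mulrA coefXM. Qed.

Lemma A_one y : A 1 y.+1 = (y < 2)%:R.
Proof.
rewrite /A G_eq -!mulrA coefXM /= coef0M coef0M coef0M coef0M !coef0_pow coef0_io expr1n !coefD coef0_G.
rewrite coef1 coefX !coefXn !coefMNn !coefXn /=.
case: y => [|[|y]]; rewrite /Gp ?coef0 ?coef1 ?coef0_G /=; ring.
Qed.

Lemma cgMn M p q n : cg M p q -> cg M (p *+ n) (q *+ n).
Proof. by case=> r h; exists (r *+ n); rewrite -mulrnBl h mulrnAl. Qed.

Lemma cert m : A m.+1 2 *+ (m.*2.+3) = (Phi ^+ (m.*2.+3) * io m.+3 ^+ m.+2)`_m.+2.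
Proof.
set u := io m.+3. set W := Phi ^+ (m.*2.+1). set V := u ^+ m.+2.
have eW : Phi ^+ (m.*2.+3) = Phi ^+ 2 * W by rewrite /W -exprD add2n.
have eG2 : G 2 = 'X * (1 + 'X) * Phi by rewrite /= /Phi; ring.
have eA : A m.+1 2 = ('X * ('X * (1 + 'X) * Phi) * W * Tp * (V * u ^+ 2))`_m.+2.
  rewrite /A doubleS eG2 -/W -exprD -!mulrA coefXM /=.
  by rewrite !mulrA.
set P := 'X^2 * (Phi ^+ 2 * W).
have eP' : P^`() = 'X *+ 2 * (Phi ^+ 2 * W) + 'X^2 * ((1 + 'X *+ 2) * (Phi * W) *+ (m.*2.+3)).
  rewrite /P -eW derivM derivXn deriv_exp dPhi /= /W -exprS; congr (_ + _).
have nl := null_lemma P m.+2 (ltnSn m.+2).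
rewrite -/u -/V exprSr -/V in nl.
have bd := boundary (ltnSn m.+2).
rewrite -/u doubleS eW (exprSr u) -/V in bd.
rewrite eW eA.
set D1 := (P * V) *+ m.+2 - ('X * P^`() * V - ('X * P * (V * u)) *+ m.+2).
set D2 := Phi ^+ 2 * W * Tp * (V * u).
set L := 'X * ('X * (1 + 'X) * Phi) * W * Tp * (V * u ^+ 2).
have key : cg m.+3 (L *+ (m.*2.+3) - Phi ^+ 2 * W * V) (D1 *+ 2 - D2).
  apply: (@cg_trans _ _ (L *+ (m.*2.+3) - Phi ^+ 2 * W * ((1 + 'X) ^+ 2 * u ^+ 2) * V)).
    by apply: cgD; [apply: cgxx | apply: cgN; apply: cg_sym; apply: cg_unit].
  apply: (@cg_trans _ _ (((P * ((1 + 'X) ^+ 2 * u ^+ 2) * V) *+ m.+2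
       - ('X * P^`() * ((1 + 'X) ^+ 2 * u ^+ 2) * V
          - ('X * P * ((1 + 'X) ^+ 1 * u ^+ 1) * (V * u)) *+ m.+2)) *+ 2
       - Phi ^+ 2 * W * Tp * ((1 + 'X) ^+ 1 * u ^+ 1) * (V * u))).
    apply: cg_eq; rewrite eP' /L /P -!muln2.
    rewrite /Phi /Tp; ring.
  apply: cgD; last by apply: cgN; apply: cg_unit.
  apply: cgMn; apply: cgD; first by apply: cgMn; apply: cg_unit.
  apply: cgN; apply: cgD; first by apply: cg_unit.
  by apply: cgN; apply: cgMn; apply: cg_unit.
have := cg_coef key (ltnSn m.+2).
have nl0 : D1`_m.+2 = 0 by rewrite /D1 coefB coefMn nl subrr.
rewrite coefB coefMn coefB coefMn nl0 /D2 bd mul0rn subr0 => /eqP.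
by rewrite subr_eq0 => /eqP.
Qed.


Definition walks (n : nat) (y : int) : {set {ffun 'I_n -> 'I_4}} :=
  [set s | [forall i : 'I_n.+1, (0 < i)%N ==> (1 <= alt s i)] && (alt s n == y)].

Definition ext n (p : {ffun 'I_n -> 'I_4} * 'I_4) : {ffun 'I_n.+1 -> 'I_4} :=
  [ffun i => if unlift ord_max i is Some j then p.1 j else p.2].

Definition res n (t : {ffun 'I_n.+1 -> 'I_4}) : {ffun 'I_n -> 'I_4} * 'I_4 :=
  ([ffun j => t (lift ord_max j)], t ord_max).

Lemma widen_lift n (j : 'I_n) : widen_ord (leqnSn n) j = lift ord_max j.
Proof. by apply: val_inj; rewrite /= /bump leqNgt ltn_ord. Qed.

Lemma ext_res n : cancel (@res n) (@ext n).
Proof.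
move=> t; apply/ffunP => i; rewrite ffunE /=.
case: (unliftP ord_max i) => [j ->|->]; by rewrite ?ffunE.
Qed.

Lemma res_ext n : cancel (@ext n) (@res n).
Proof.
case=> s d; rewrite /res /=; congr (_, _).
  by apply/ffunP => j; rewrite !ffunE liftK.
by rewrite ffunE unlift_none.
Qed.

Lemma alt_ext n (s : {ffun 'I_n -> 'I_4}) (d : 'I_4) (i : nat) :
  alt (ext (s, d)) i = alt s i + (if (n < i)%N then stepv d else 0).
Proof.
rewrite /alt big_mkcond big_ord_recr /= [in RHS]big_mkcond /=.
congr (_ + _).
  apply: eq_bigr => j _; rewrite widen_lift ffunE liftK /=; done.
by rewrite ffunE unlift_none.
Qed.

Lemma alt_ge n (s : {ffun 'I_n -> 'I_4}) i : (n <= i)%N -> alt s i = alt s n.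
Proof.
move=> ni; rewrite /alt; apply: eq_bigl => j.
by rewrite (leq_trans (ltn_ord j) ni) ltn_ord.
Qed.

Lemma mem_ext n (s : {ffun 'I_n -> 'I_4}) d y :
  (ext (s, d) \in walks n.+1 y) = (1 <= y) && (s \in walks n (y - stepv d)).
Proof.
rewrite !inE alt_ext ltnSn (alt_ge s (leqnSn n)).
apply/idP/idP.
- case/andP => /forallP h /eqP ey.
  have h1 := h ord_max; rewrite /= alt_ext ltnSn (alt_ge s (leqnSn n)) ey in h1.
  rewrite h1 /=; apply/andP; split; last by rewrite -ey addrK.
  apply/forallP => i; apply/implyP => i0.
  have := h (widen_ord (leqnSn _) i); rewrite /= i0 /= alt_ext.
  by rewrite ltnNge -ltnS ltn_ord /= addr0.
- case/andP => y1 /andP [/forallP h /eqP e].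
  apply/andP; split; last by rewrite e subrK.
  apply/forallP => i; apply/implyP => i0.
  rewrite alt_ext.
  case: (ltnP n i) => ni.
    by rewrite (alt_ge s (ltnW ni)) e subrK.
  rewrite addr0.
  have hi : (i < n.+1)%N by [].
  by have := h (Ordinal hi); rewrite /= i0.
Qed.

Lemma walks_rec n y : #|walks n.+1 y| =
  if 1 <= y then (\sum_(d : 'I_4) #|walks n (y - stepv d)|)%N else 0%N.
Proof.
rewrite -sum1_card (reindex (@ext n)) /=; last first.
  by apply: onW_bij; exists (@res n); [exact: res_ext | exact: ext_res].
rewrite big_mkcond /= -(pair_bigA _ (fun s d => if ext (s, d) \in walks n.+1 y then 1%N else 0%N)) /=.
under eq_bigr => s _ do under eq_bigr => d _ do rewrite mem_ext.
case: (1 <= y) => /=; last by rewrite big1 // => s _; rewrite big1.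
rewrite exchange_big /=; apply: eq_bigr => d _.
by rewrite -big_mkcond sum1_card.
Qed.

Lemma walks0 y : #|walks 0 y| = (y == 0).
Proof.
have e : forall s : {ffun 'I_0 -> 'I_4}, alt s 0 = 0 by move=> s; rewrite /alt big_ord0.
case: (boolP (y == 0)) => [/eqP -> | hy].
  rewrite (_ : nat_of_bool (0 == 0 :> int) = #|{ffun 'I_0 -> 'I_4}|); last by rewrite card_ffun !card_ord.
  apply: eq_card => s.
  rewrite !inE e eqxx andbT; apply/forallP => i; apply/implyP.
  by case: i => [[|]].
apply/eqP; rewrite cards_eq0; apply/eqP/setP => s; rewrite !inE e.
by rewrite eq_sym (negbTE hy) andbF.
Qed.

Lemma stepsum (F : int -> nat) :
  (\sum_(d : 'I_4) F (stepv d) = F (-2)%R + F (-1)%R + F 1%R + F 2%R)%N.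
Proof. by rewrite !big_ord_recr big_ord0 /= add0n. Qed.

Lemma walks_neg m (y : int) : y <= 0 -> #|walks m.+1 y| = 0%N.
Proof. by move=> hy; rewrite walks_rec; case: ifP => // h; move: (le_trans h hy). Qed.

Lemma cnt_A m (y : nat) : (#|walks m.+1 y|)%:R = A m.+1 y.
Proof.
elim: m y => [|m IH] [|y].
- by rewrite walks_neg // A_zero.
- rewrite walks_rec /= (stepsum (fun z => #|walks 0 (y.+1%:Z - z)|)) A_one.
  have e1 : (y.+1%:Z - (-2)) = y.+3 by lia.
  have e2 : (y.+1%:Z - (-1)) = y.+2 by lia.
  have e3 : (y.+1%:Z - 1) = y by lia.
  have e4 : (y.+1%:Z - 2) = y%:Z - 1 by lia.
  rewrite e1 e2 e3 e4 !walks0.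
  by case: y {e1 e2 e3 e4} => [|[|y]].
- by rewrite walks_neg // A_zero.
- rewrite walks_rec /= (stepsum (fun z => #|walks m.+1 (y.+1%:Z - z)|)) A_rec !natrD.
  have e1 : (y.+1%:Z - (-2)) = y.+3 by lia.
  have e2 : (y.+1%:Z - (-1)) = y.+2 by lia.
  have e3 : (y.+1%:Z - 1) = y by lia.
  rewrite e1 e2 e3 !IH.
  case: y {e1 e2 e3} => [|y].
    by rewrite walks_neg.
  have e4 : (y.+2%:Z - 2) = y by lia.
  by rewrite e4 IH.
Qed.

Lemma coef_1X k j : ((1 + 'X : {poly rat}) ^+ k)`_j = ('C(k, j))%:R.
Proof.
elim: k j => [|k IH] j; first by rewrite expr0 coef1; case: j.
rewrite exprS mulrDl mul1r coefD coefXM IH.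
case: j => [|j] /=; first by rewrite !bin0 addr0.
by rewrite IH binS natrD addrC.
Qed.

Lemma binz_nat (a k : nat) : binz a%:Z k = ('C(a, k))%:R.
Proof.
rewrite /binz.
have -> : \prod_(i < k) (a%:Z - i%:Z)%:~R = (a ^_ k)%:R :> rat.
  elim: k => [|k IH]; first by rewrite big_ord0 ffactn0.
  rewrite big_ord_recr /= IH ffactnSr natrM.
  case: (leqP k a) => ka; first by rewrite subzn.
  by rewrite ffact_small // mul0r mul0r.
by rewrite -bin_ffact natrM mulfK // pnatr_eq0 -lt0n fact_gt0.
Qed.

Lemma coef_sign (i j : nat) (p : {poly rat}) : (((-1) ^+ i : {poly rat}) * p)`_j = (-1) ^+ i * p`_j.
Proof.
rewrite -signr_odd -[in RHS]signr_odd; case: (odd i); first by rewrite expr1 !mulN1r coefN.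
by rewrite expr0 !mul1r.
Qed.

Lemma expand m : (Phi ^+ (m.*2.+3) * io m.+3 ^+ m.+2)`_m.+2 =
  \sum_(0 <= k < m.+3) (-1) ^+ (m.+1 + k + 1) * ('C(m.*2.+3, m.+1 + k))%:R * ('C(m + 2 * k, k))%:R.
Proof.
set K := m.*2.+3.
have eK : Phi ^+ K = - \sum_(i < K.+1) 'X ^+ (K - i) * (- (1 + 'X) ^+ 2) ^+ i *+ 'C(K, i).
  rewrite -exprDn (_ : 'X - (1 + 'X) ^+ 2 = - Phi); last by rewrite /Phi; ring.
  by rewrite exprNn -signr_odd /K /= odd_double /= expr1 mulN1r opprK.
rewrite eK mulNr big_distrl coefN coef_sum /=.
have term i : (i <= K)%N -> ('X ^+ (K - i) * (- (1 + 'X) ^+ 2) ^+ i *+ 'C(K, i) * io m.+3 ^+ m.+2)`_m.+2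
   = ('C(K, i))%:R * (-1) ^+ i * (if (i < m.+1)%N then 0 else ('C(i.*2 - m.+2, i - m.+1))%:R).
  move=> iK.
  have -> : 'X ^+ (K - i) * (- (1 + 'X) ^+ 2) ^+ i *+ 'C(K, i) * io m.+3 ^+ m.+2 =
     ('X ^+ (K - i) * ((-1) ^+ i * ((1 + 'X) ^+ (i.*2) * io m.+3 ^+ m.+2))) *+ 'C(K, i).
    by rewrite -mul2n exprM (exprNn ((1 + 'X) ^+ 2)); ring.
  rewrite coefMn coefXnM -[RHS]mulrA mulr_natl.
  have -> : (m.+2 < K - i)%N = (i < m.+1)%N by rewrite /K; lia.
  case: ifP => hi; first by rewrite mul0rn mulr0 mul0rn.
  rewrite coef_sign.
  have e1 : (m.+2 - (K - i) = i - m.+1)%N by rewrite /K; lia.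
  have e2 : i.*2 = (i.*2 - m.+2 + m.+2)%N by lia.
  rewrite e1 (_ : (1 + 'X) ^+ (i.*2) = (1 + 'X) ^+ (i.*2 - m.+2) * (1 + 'X) ^+ m.+2); last by rewrite -exprD -e2.
  have h := cg_unit m.+3 ((1 + 'X) ^+ (i.*2 - m.+2)) 1 m.+2.
  rewrite !mulr1 in h.
  rewrite -mulrA (cg_coef h); last by rewrite /K in iK; lia.
  by rewrite coef_1X.
rewrite (eq_bigr (fun i : 'I_K.+1 => 'C(K, i)%:R * (-1) ^+ i *
   (if (i < m.+1)%N then 0 else 'C(i.*2 - m.+2, i - m.+1)%:R))); last first.
  by move=> i _; apply: term; rewrite -ltnS ltn_ord.
rewrite -(big_mkord xpredT (fun i => 'C(K, i)%:R * (-1) ^+ i *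
   (if (i < m.+1)%N then 0 else 'C(i.*2 - m.+2, i - m.+1)%:R))).
rewrite (@big_cat_nat _ _ _ m.+1) //=; last by rewrite /K; lia.
rewrite [X in - (X + _)]big_nat_cond big1 ?add0r; last first.
  by move=> i /andP [/andP [_ hi] _]; rewrite hi !mulr0.
rewrite -{1}(add0n m.+1) big_addn (_ : (K.+1 - m.+1 = m.+3)%N); last by rewrite /K; lia.
rewrite -sumrN; apply: eq_bigr => k _.
rewrite ltnNge leq_addl /= addnK (_ : ((k + m.+1).*2 - m.+2 = m + 2 * k)%N); last by lia.
rewrite (addnC k m.+1) addn1 exprS; ring.
Qed.

Unset Implicit Arguments.

Theorem proposition3p6 (n : nat) :
  (#|bb_walks n|)%:R =
  ((2 * n + 1)%N%:R)^-1 *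
    \sum_(0 <= k < n.+2)
      (-1) ^+ (n + k + 1) * ('C(2 * n + 1, n + k))%:R
        * binz (n%:Z + (2 * k)%:Z - 1) k :> rat.
Proof.
case: n => [|m].
  rewrite (_ : bb_walks 0 = walks 0 2) // walks0 /=.
  rewrite big_mkord !big_ord_recr big_ord0 /= /binz !big_ord0 big_ord1 /=.
  by rewrite (_ : (0%Z + (2 * 1)%N - 1 - 0%Z) = 1) //=.
rewrite (_ : bb_walks m.+1 = walks m.+1 2) // (cnt_A m 2).
rewrite (_ : (2 * m.+1 + 1 = m.*2.+3)%N); last by rewrite -muln2; lia.
have eb k : binz (m.+1%:Z + (2 * k)%:Z - 1) k = ('C(m + 2 * k, k))%:R.
  by rewrite (_ : m.+1%:Z + (2 * k)%:Z - 1 = (m + 2 * k)%N) ?binz_nat //; lia.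
under eq_bigr => k _ do rewrite eb.
rewrite -expand -cert -(mulr_natl (A m.+1 2)) mulKf //.
by rewrite pnatr_eq0.
Qed.
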